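(* Let $T \in \mathscr{B}(\mathscr{H})$ be a natural left invertible operator, let $P = I - TT^\dagger$, and set \[ \mathscr{K}_T := \overline{\operatorname{span}}\{T^n P (T^\dagger)^m : n, m \ge 0\}. \] Then $\mathscr{K}_T = \mathscr{C}$, the commutator ideal of $\mathfrak{A}_T$.
   Context: For a left invertible $T$, $T^\dagger = (T^*T)^{-1}T^*$ is its Moore–Penrose inverse, and $\mathfrak{A}_T$ is the norm-closed algebra generated by $T$ and $T^\dagger$. The commutator ideal of $\mathfrak{A}_T$ is the closed two-sided ideal generated by all commutators in $\mathfrak{A}_T$. A left invertible $T$ is natural if $0 < \dim\ker(T^* ) < \infty$. *)

(* Defs.v *)
From mathcomp Require Import all_boot all_algebra.
From mathcomp Require Import all_classical all_reals.
From mathcomp.real_closed Require Import complex.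
Set Implicit Arguments. Unset Strict Implicit. Unset Printing Implicit Defensive.
Import GRing.Theory Num.Theory.
Local Open Scope ring_scope.

Section Hilbert.
Variable R : realType.
Local Notation C := R[i].
Variable H : lmodType C.
Variable ip : H -> H -> C.   (* inner product, linear in the first argument *)

Definition hnorm (x : H) : C := sqrtC (ip x x).

Definition is_hilbert : Prop :=
  [/\ (forall (a : C) (x y z : H), ip (a *: x + y) z = a * ip x z + ip y z),
      (forall x y, ip y x = (ip x y)^*),
      (forall x, 0 <= ip x x),
      (forall x, ip x x = 0 -> x = 0) &
      (forall u : nat -> H,
         (forall e : C, 0 < e -> exists N, forall m n, (N <= m)%N -> (N <= n)%N ->
             hnorm (u m - u n) <= e) ->
         exists l : H, forall e : C, 0 < e -> exists N, forall n, (N <= n)%N ->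
             hnorm (u n - l) <= e)].

Definition op := H -> H.
Definition lin_op (A : op) : Prop :=
  forall (a : C) (x y : H), A (a *: x + y) = a *: A x + A y.
Definition bdd (A : op) : Prop :=
  lin_op A /\ exists M : C, forall x, hnorm (A x) <= M * hnorm x.
Definition is_adjoint (A S : op) : Prop := forall x y, ip (A x) y = ip x (S y).

Definition op0 : op := fun _ => 0.
Definition op_id : op := fun x => x.
Definition op_add (A B : op) : op := fun x => A x + B x.
Definition op_sub (A B : op) : op := fun x => A x - B x.
Definition op_scale (a : C) (A : op) : op := fun x => a *: A x.
Definition op_comp (A B : op) : op := fun x => A (B x).

Definition opset := op -> Prop.

Definition norm_closed (S : opset) : Prop :=
  forall A, bdd A ->
    (forall e : C, 0 < e -> exists B, S B /\ forall x, hnorm (A x - B x) <= e * hnorm x) ->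
    S A.
Definition subspace (S : opset) : Prop :=
  [/\ (forall A, S A -> bdd A), S op0 &
      (forall (a : C) A B, S A -> S B -> S (op_add (op_scale a A) B))].
Definition subalgebra (S : opset) : Prop :=
  subspace S /\ (forall A B, S A -> S B -> S (op_comp A B)).

Definition closed_alg_gen (G : opset) : opset := fun A =>
  forall S, subalgebra S -> norm_closed S -> (forall B, G B -> S B) -> S A.
Definition closed_span (G : opset) : opset := fun A =>
  forall S, subspace S -> norm_closed S -> (forall B, G B -> S B) -> S A.
Definition ideal_of (Alg J : opset) : Prop :=
  [/\ subspace J, (forall A, J A -> Alg A) &
      (forall A B, Alg A -> J B -> J (op_comp A B) /\ J (op_comp B A))].
Definition commutator_ideal (Alg : opset) : opset := fun A =>
  forall J, ideal_of Alg J -> norm_closed J ->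
    (forall X Y, Alg X -> Alg Y -> J (op_sub (op_comp X Y) (op_comp Y X))) -> J A.

Definition left_invertible (T : op) : Prop :=
  bdd T /\ exists L, bdd L /\ op_comp L T = op_id.

Definition moore_penrose (T Ts Td : op) : Prop :=
  exists B, [/\ bdd B, op_comp B (op_comp Ts T) = op_id,
                op_comp (op_comp Ts T) B = op_id & Td = op_comp B Ts].

Definition kernel_fin_pos (Ts : op) : Prop :=
  (exists x : H, x != 0 /\ Ts x = 0) /\
  (exists (n : nat) (e : 'I_n -> H), forall x,
      Ts x = 0 <-> exists c : 'I_n -> C, x = \sum_(i < n) c i *: e i).

Definition natural (T Ts : op) : Prop := left_invertible T /\ kernel_fin_pos Ts.

Definition op_pow (A : op) (n : nat) : op := fun x => iter n A x.

End Hilbert.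

Arguments op0 {R H}.
Arguments op_id {R H}.

(* Main.v *)
Require Import Defs.
From mathcomp Require Import all_boot all_algebra.
From mathcomp Require Import all_classical all_reals.
From mathcomp.real_closed Require Import complex.
From mathcomp Require Import ring lra.
From mathcomp Require Import order.
Set Implicit Arguments. Unset Strict Implicit.
Import Order.TTheory GRing.Theory Num.Theory.
Local Open Scope ring_scope.

Section IP.
Variable R : realType.
Local Notation C := R[i].
Variable H : lmodType C.
Variable ip : H -> H -> C.
Hypothesis hH : is_hilbert ip.

Lemma ipL a x y z : ip (a *: x + y) z = a * ip x z + ip y z.
Proof. by case: hH. Qed.
Lemma ipS x y : ip y x = (ip x y)^*.
Proof. by case: hH. Qed.
Lemma ipP x : 0 <= ip x x.
Proof. by case: hH. Qed.
Lemma ipD x : ip x x = 0 -> x = 0.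
Proof. by case: hH => _ _ _ h _; apply: h. Qed.

Lemma ip0l z : ip 0 z = 0.
Proof.
have := ipL 1 0 0 z; rewrite scale1r addr0 mul1r.
by move/(congr1 (fun t => t - ip 0 z)); rewrite subrr addrK.
Qed.
Lemma ipDl x y z : ip (x + y) z = ip x z + ip y z.
Proof. by rewrite -[x]scale1r ipL mul1r scale1r. Qed.
Lemma ipZl a x z : ip (a *: x) z = a * ip x z.
Proof. by rewrite -[a *: x]addr0 ipL ip0l addr0. Qed.
Lemma ipNl x z : ip (- x) z = - ip x z.
Proof. by rewrite -scaleN1r ipZl mulN1r. Qed.
Lemma ipBl x y z : ip (x - y) z = ip x z - ip y z.
Proof. by rewrite ipDl ipNl. Qed.
Lemma ipDr x y z : ip z (x + y) = ip z x + ip z y.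
Proof. by rewrite ipS ipDl [ip z x]ipS [ip z y]ipS; apply: rmorphD. Qed.
Lemma ipZr a x z : ip z (a *: x) = a^* * ip z x.
Proof. by rewrite ipS ipZl [ip z x]ipS; apply: rmorphM. Qed.
Lemma ipBr x y z : ip z (x - y) = ip z x - ip z y.
Proof. by rewrite ipDr -scaleN1r ipZr rmorphN1 mulN1r. Qed.
Lemma ip_real x : (ip x x)^* = ip x x.
Proof. by rewrite -ipS. Qed.

Lemma CS x y : ip x y * (ip x y)^* <= ip x x * ip y y.
Proof.
set s := ip x y; set b := ip y y.
have b0 : 0 <= b by apply: ipP.
have [bz|bn0] := eqVneq b 0.
  have y0 : y = 0 by apply: ipD; exact: bz.
  by rewrite /s /b y0 ipS ip0l conjC0 conjC0 mul0r ip0l mulr0.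
have bp : 0 < b by rewrite lt0r bn0 b0.
have := ipP (b *: x - s *: y).
rewrite ipBl !ipBr !ipZl !ipZr -/s -/b (ipS x y) -/s.
have -> : b^* = b by rewrite /b ip_real.
have -> : b * (b * ip x x) - b * (s^* * s) - (s * (b * s^*) - s * (s^* * b)) =
   b * (b * ip x x - s * s^*) by ring.
by rewrite pmulr_rge0 // subr_ge0 [ip x x * b]mulrC.
Qed.

Local Notation hn := (hnorm ip).

Lemma hn_ge0 x : 0 <= hn x.
Proof. by rewrite /hnorm sqrtC_ge0 ipP. Qed.
Lemma hn_sq x : hn x ^+ 2 = ip x x.
Proof. exact: sqrtCK. Qed.
Lemma hn_leP x u : 0 <= u -> (hn x <= u) = (ip x x <= u ^+ 2).
Proof.
move=> u0; rewrite -{1}(sqrCK u0) /hnorm ler_sqrtC // qualifE /=.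
  exact: ipP.
by rewrite exprn_ge0.
Qed.
Lemma hnZ a x : hn (a *: x) = `|a| * hn x.
Proof.
rewrite /hnorm ipZl ipZr mulrA -normCK sqrtCM ?qualifE /= ?exprn_ge0 ?ipP //.
by rewrite sqrCK.
Qed.
Lemma hn_triangle x y : hn (x + y) <= hn x + hn y.
Proof.
rewrite hn_leP ?addr_ge0 ?hn_ge0 // ipDl !ipDr.
set s := ip x y.
rewrite (ipS x y) -/s sqrrD !hn_sq.
have ls : `|s| <= hn x * hn y.
  rewrite -ler_sqr ?qualifE /= ?mulr_ge0 ?hn_ge0 //.
  by rewrite exprMn !hn_sq normCK CS.
have : s + s^* <= hn x * hn y *+ 2.
  apply: le_trans (real_ler_norm _) _.
    by rewrite CrealE rmorphD /= conjCK addrC.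
  apply: le_trans (ler_normD _ _) _.
  by rewrite norm_conjC mulr2n lerD.
move=> h.
have -> : ip x x + s + (s^* + ip y y) = ip x x + ip y y + (s + s^*) by ring.
have -> : ip x x + hn x * hn y *+ 2 + ip y y = ip x x + ip y y + hn x * hn y *+ 2 by ring.
by rewrite lerD2l.
Qed.

Lemma hnN x : hn (- x) = hn x.
Proof. by rewrite -scaleN1r hnZ normrN normr1 mul1r. Qed.
Lemma hn_triangleB x y : hn (x - y) <= hn x + hn y.
Proof. by rewrite -(hnN y) hn_triangle. Qed.

Section Lin.
Variable A : op H.
Hypothesis hA : lin_op A.
Lemma lin0 : A 0 = 0.
Proof.
have := hA 1 0 0; rewrite scale1r addr0 scale1r.
by move/(congr1 (fun t => t - A 0)); rewrite subrr addrK.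
Qed.
Lemma linD x y : A (x + y) = A x + A y.
Proof. by rewrite -{1}[x]scale1r hA scale1r. Qed.
Lemma linZ a x : A (a *: x) = a *: A x.
Proof. by rewrite -[a *: x]addr0 hA lin0 addr0. Qed.
Lemma linN x : A (- x) = - A x.
Proof. by rewrite -scaleN1r linZ scaleN1r. Qed.
Lemma linB x y : A (x - y) = A x - A y.
Proof. by rewrite linD linN. Qed.
End Lin.

Definition approx (A B : op H) (e : C) := forall x, hn (A x - B x) <= e * hn x.

Lemma bdd_pos A : bdd ip A -> exists2 M, 0 < M & forall x, hn (A x) <= M * hn x.
Proof.
case=> _ [M hM].
have [[x0 hx0]|nx] := pselect (exists x, hn x != 0).
  have hp : 0 < hn x0 by rewrite lt0r hx0 hn_ge0.
  have M0 : 0 <= M by rewrite -(pmulr_lge0 _ hp) (le_trans (hn_ge0 _) (hM x0)).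
  exists (M + 1); first by rewrite ltr_wpDl.
  move=> x; apply: le_trans (hM x) _; apply: ler_wpM2r; first exact: hn_ge0.
  by rewrite lerDl ler01.
exists 1; first exact: ltr01.
move=> x; have e : hn x = 0.
  by case: (eqVneq (hn x) 0) => // h; exfalso; apply: nx; exists x.
by move: (hM x); rewrite e !mulr0.
Qed.

Lemma bdd_lin A : bdd ip A -> lin_op A.
Proof. by move=> [h _]. Qed.

Lemma bdd_comp A B : bdd ip A -> bdd ip B -> bdd ip (op_comp A B).
Proof.
move=> hA hB; split.
  by move=> a x y; rewrite /op_comp (bdd_lin hB) (bdd_lin hA).
have [M M0 hM] := bdd_pos hA; have [N N0 hN] := bdd_pos hB.
exists (M * N) => x; apply: le_trans (hM _) _; rewrite -mulrA.
by rewrite ler_pM2l.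
Qed.

Lemma bdd_comb a A B : bdd ip A -> bdd ip B -> bdd ip (op_add (op_scale a A) B).
Proof.
move=> hA hB; split.
  move=> b x y; rewrite /op_add /op_scale (bdd_lin hB) (bdd_lin hA).
  by rewrite !scalerDr !scalerA [a * b]mulrC addrACA.
have [M M0 hM] := bdd_pos hA; have [N N0 hN] := bdd_pos hB.
exists (`|a| * M + N) => x; apply: le_trans (hn_triangle _ _) _.
rewrite hnZ mulrDl lerD // -mulrA; apply: ler_wpM2l => //; exact: normr_ge0.
Qed.

Lemma bdd0 : bdd ip op0.
Proof.
split; first by move=> a x y; rewrite /op0 scaler0 addr0.
by exists 0 => x; rewrite /op0 mul0r /hnorm ip0l sqrtC0.
Qed.

Lemma bdd_id : bdd ip op_id.
Proof. by split => //; exists 1 => x; rewrite mul1r. Qed.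

Lemma bdd_pow A n : bdd ip A -> bdd ip (op_pow A n).
Proof.
move=> hA; elim: n => [|n IH]; first exact: bdd_id.
exact: (bdd_comp hA IH).
Qed.


Lemma subsubAC (a b c d : H) : (a - b) - (c - d) = (a - c) - (b - d).
Proof. by rewrite !opprD !opprK addrACA. Qed.

Definition comm (X A : op H) : op H := op_sub (op_comp X A) (op_comp A X).

Lemma close_map (K : opset H) (F : op H -> op H) (Q : op H -> Prop) c A :
  norm_closed ip K -> 0 < c -> bdd ip (F A) ->
  (forall B e, Q B -> 0 < e -> approx A B e -> approx (F A) (F B) (c * e)) ->
  (forall e, 0 < e -> exists B, Q B /\ approx A B e) ->
  (forall B, Q B -> K (F B)) -> K (F A).
Proof.
move=> hK c0 bF hF happ hQ; apply: hK => // e e0.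
have [B [QB hB]] := happ (e / c) (divr_gt0 e0 c0).
exists (F B); split; first exact: hQ.
have := hF B _ QB (divr_gt0 e0 c0) hB.
by rewrite mulrC divfK // gt_eqF.
Qed.

Lemma lip_r X : bdd ip X -> exists2 c, 0 < c & forall A B e, 0 < e ->
  approx A B e -> approx (op_comp A X) (op_comp B X) (c * e).
Proof.
move=> hX; have [M M0 hM] := bdd_pos hX; exists M => // A B e e0 hAB x.
rewrite /op_comp; apply: le_trans (hAB _) _.
by rewrite [M * e]mulrC -mulrA ler_pM2l.
Qed.

Lemma lip_l X : bdd ip X -> exists2 c, 0 < c & forall A B e, 0 < e ->
  approx A B e -> approx (op_comp X A) (op_comp X B) (c * e).
Proof.
move=> hX; have [M M0 hM] := bdd_pos hX; exists M => // A B e e0 hAB x.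
rewrite /op_comp -(linB (bdd_lin hX)); apply: le_trans (hM _) _.
by rewrite -mulrA ler_pM2l.
Qed.

Lemma lip_comm X : bdd ip X -> exists2 c, 0 < c & forall A B e, 0 < e ->
  approx A B e -> approx (comm X A) (comm X B) (c * e) /\
                  approx (comm A X) (comm B X) (c * e).
Proof.
move=> hX; have [c1 c10 h1] := lip_l hX; have [c2 c20 h2] := lip_r hX.
exists (c1 + c2); first by rewrite addr_gt0.
move=> A B e e0 hAB; split => x; rewrite /comm /op_sub subsubAC;
  apply: le_trans (hn_triangleB _ _) _; rewrite mulrDl mulrDl.
  by rewrite lerD //; [exact: (h1 A B e e0 hAB x) | exact: (h2 A B e e0 hAB x)].
rewrite [c1 * e * hn x + _]addrC lerD //; [exact: (h2 A B e e0 hAB x) | exact: (h1 A B e e0 hAB x)].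
Qed.

Lemma addsubACA (p v q z : H) : (p + v) - (q + z) = (p - q) + (v - z).
Proof. by rewrite opprD addrACA. Qed.
Lemma subsubK (a b c : H) : (a - b) + (b - c) = a - c.
Proof. by rewrite addrA subrK. Qed.

Section Subspace.
Variable S : opset H.
Hypothesis hS : subspace ip S.
Lemma sub_bdd A : S A -> bdd ip A. Proof. by case: hS => h _ _; apply: h. Qed.
Lemma sub0 : S op0. Proof. by case: hS. Qed.
Lemma sub_comb a A B : S A -> S B -> S (op_add (op_scale a A) B).
Proof. by case: hS => _ _ h; apply: h. Qed.
Lemma sub_add A B : S A -> S B -> S (op_add A B).
Proof.
move=> hA hB; have := sub_comb 1 hA hB.
by have -> : op_scale 1 A = A by apply: funext => x; rewrite /op_scale scale1r.
Qed.
Lemma sub_scale a A : S A -> S (op_scale a A).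
Proof.
move=> hA; have := sub_comb a hA sub0.
by have -> : op_add (op_scale a A) op0 = op_scale a A
  by apply: funext => x; rewrite /op_add /op0 addr0.
Qed.
Lemma sub_sub A B : S A -> S B -> S (op_sub A B).
Proof.
move=> hA hB; have := sub_comb (-1) hB hA.
have -> // : op_add (op_scale (-1) B) A = op_sub A B.
by apply: funext => x; rewrite /op_add /op_scale /op_sub scaleN1r addrC.
Qed.
End Subspace.

Lemma bdd_subspace : subspace ip (bdd ip).
Proof. split => //; [exact: bdd0 | move=> a A B; exact: bdd_comb]. Qed.

Lemma bdd_subop A B : bdd ip A -> bdd ip B -> bdd ip (op_sub A B).
Proof. exact: (sub_sub bdd_subspace). Qed.

Lemma bdd_comm A B : bdd ip A -> bdd ip B -> bdd ip (comm A B).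
Proof. by move=> hA hB; apply: bdd_subop; apply: bdd_comp. Qed.

Section Main.
Variables T Td : op H.
Hypothesis hTb : bdd ip T.
Hypothesis hTdb : bdd ip Td.
Hypothesis hTdT : forall x, Td (T x) = x.

Let P := op_sub op_id (op_comp T Td).
Let gen n m := op_comp (op_comp (op_pow T n) P) (op_pow Td m).
Let G : opset H := fun B => exists n m : nat, B = gen n m.
Let K := closed_span ip G.
Let Alg := closed_alg_gen ip (fun B => B = T \/ B = Td).

Lemma P_bdd : bdd ip P.
Proof. apply: bdd_subop; [exact: bdd_id | exact: bdd_comp]. Qed.

Lemma gen_bdd n m : bdd ip (gen n m).
Proof. by apply: bdd_comp; [apply: bdd_comp; [apply: bdd_pow | exact: P_bdd] | apply: bdd_pow]. Qed.

Lemma K_gen n m : K (gen n m).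
Proof. by move=> S _ _ hG; apply: hG; exists n, m. Qed.

Lemma K_closed : norm_closed ip K.
Proof.
move=> A bA hA S hS hSc hG; apply: (hSc) => // e e0.
have [B [KB hB]] := hA e e0; exists B; split => //; by apply: KB.
Qed.

Lemma K_subspace : subspace ip K.
Proof.
split.
- move=> A hA; apply: hA; [exact: bdd_subspace | by move=> ? ? _ | ].
  by move=> B [n [m ->]]; apply: gen_bdd.
- by move=> S hS _ _; apply: sub0.
- by move=> a A B hA hB S hS hc hG; apply: (sub_comb hS); [apply: hA | apply: hB].
Qed.


Lemma K_bdd A : K A -> bdd ip A.
Proof. exact: (sub_bdd K_subspace). Qed.

Lemma bdd_subalgebra : subalgebra ip (bdd ip).
Proof. split; [exact: bdd_subspace | move=> A B; exact: bdd_comp]. Qed.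

Lemma Alg_bdd A : Alg A -> bdd ip A.
Proof.
move=> hA; apply: hA; [exact: bdd_subalgebra | by move=> ? ? _ | ].
by move=> B [->|->].
Qed.

Lemma Alg_subalgebra : subalgebra ip Alg.
Proof.
split; first split.
- exact: Alg_bdd.
- by move=> S [hS _] _ _; apply: sub0.
- by move=> a A B hA hB S hS hc hG; apply: (sub_comb hS.1); [apply: hA | apply: hB].
- by move=> A B hA hB S hS hc hG; apply: hS.2; [apply: hA | apply: hB].
Qed.

Lemma Alg_closed : norm_closed ip Alg.
Proof.
move=> A bA hA S hS hSc hG; apply: (hSc) => // e e0.
have [B [KB hB]] := hA e e0; exists B; split => //; by apply: KB.
Qed.

Lemma Alg_T : Alg T. Proof. by move=> S _ _ hG; apply: hG; left. Qed.
Lemma Alg_Td : Alg Td. Proof. by move=> S _ _ hG; apply: hG; right. Qed.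

Lemma gen_S n m : op_comp T (gen n m) = gen n.+1 m.
Proof. by []. Qed.
Lemma gen_Sr n m : op_comp (gen n m) Td = gen n m.+1.
Proof. by apply: funext => x; rewrite /gen /op_comp /op_pow iterSr. Qed.
Lemma gen00 : gen 0 0 = P.
Proof. by []. Qed.

Lemma Td_gen n m : op_comp Td (gen n m) = if n is k.+1 then gen k m else op0.
Proof.
apply: funext => x; case: n => [|k]; rewrite /gen /op_comp /op_pow /=.
  by rewrite /P /op_sub /op_comp /op_id (linB (bdd_lin hTdb)) hTdT subrr.
by rewrite hTdT.
Qed.

Lemma gen_T n m : op_comp (gen n m) T = if m is k.+1 then gen n k else op0.
Proof.
apply: funext => x; case: m => [|k]; rewrite /gen /op_comp /op_pow /=.
  rewrite /P /op_sub /op_comp /op_id hTdT subrr.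
  exact: (lin0 (bdd_lin (bdd_pow n hTb))).
by rewrite -iterS iterSr hTdT.
Qed.

Lemma comp0l (A : op H) : op_comp op0 A = op0. Proof. by []. Qed.
Lemma comp0r (A : op H) : lin_op A -> op_comp A op0 = op0.
Proof. by move=> hA; apply: funext => x; rewrite /op_comp /op0 lin0. Qed.
Lemma comb_compl a (A B X : op H) :
  op_comp (op_add (op_scale a A) B) X = op_add (op_scale a (op_comp A X)) (op_comp B X).
Proof. by []. Qed.
Lemma comb_compr a (A B X : op H) : lin_op X ->
  op_comp X (op_add (op_scale a A) B) = op_add (op_scale a (op_comp X A)) (op_comp X B).
Proof.
by move=> hX; apply: funext => x; rewrite /op_comp /op_add /op_scale (linD hX) (linZ hX).
Qed.

Lemma stepA B : K B ->
  [/\ K (op_comp T B), K (op_comp B T), K (op_comp Td B) & K (op_comp B Td)].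
Proof.
move=> hB.
pose Q := fun B => bdd ip B /\
  [/\ K (op_comp T B), K (op_comp B T), K (op_comp Td B) & K (op_comp B Td)].
suff : Q B by case.
apply: hB.
- split; first by move=> A [].
  + split; first exact: bdd0.
    rewrite !comp0l !comp0r; try exact: bdd_lin.
    by split; apply: sub0; apply: K_subspace.
  + move=> a A1 A2 [b1 [h11 h12 h13 h14]] [b2 [h21 h22 h23 h24]]; split.
      exact: bdd_comb.
    rewrite !comb_compl !comb_compr; try exact: bdd_lin.
    by split; apply: (sub_comb K_subspace).
- move=> A bA hA; split => //.
  have hK := K_closed.
  have Hl X : bdd ip X -> (forall B, Q B -> K (op_comp X B)) -> K (op_comp X A).
    move=> bX hQ; have [c c0 hc] := lip_l bX.
    apply: (close_map (F := op_comp X) (Q := Q) hK c0 (bdd_comp bX bA)) => //.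
    by move=> B' e _ e0; apply: hc.
  have Hr X : bdd ip X -> (forall B, Q B -> K (op_comp B X)) -> K (op_comp A X).
    move=> bX hQ; have [c c0 hc] := lip_r bX.
    apply: (close_map (F := fun B => op_comp B X) (Q := Q) hK c0 (bdd_comp bA bX)) => //.
    by move=> B' e _ e0; apply: hc.
  split.
  + by apply: Hl hTb _ => B' [_ []].
  + by apply: Hr hTb _ => B' [_ []].
  + by apply: Hl hTdb _ => B' [_ []].
  + by apply: Hr hTdb _ => B' [_ []].
- move=> B' [n [m ->]]; split; first exact: gen_bdd.
  split.
  + rewrite gen_S; exact: K_gen.
  + rewrite gen_T; case: m => [|k]; [apply: sub0; exact: K_subspace | exact: K_gen].
  + rewrite Td_gen; case: n => [|k]; [apply: sub0; exact: K_subspace | exact: K_gen].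
  + rewrite gen_Sr; exact: K_gen.
Qed.

Lemma stepB A B : Alg A -> K B -> K (op_comp A B) /\ K (op_comp B A).
Proof.
move=> hA.
pose Q := fun A => bdd ip A /\ forall B, K B -> K (op_comp A B) /\ K (op_comp B A).
suff : Q A by case=> _; apply.
apply: hA.
- split; first split.
  + by move=> A' [].
  + split; first exact: bdd0.
    move=> B' hB'; rewrite comp0l comp0r; last exact: bdd_lin (K_bdd hB').
    by split; apply: sub0; apply: K_subspace.
  + move=> a A1 A2 [b1 h1] [b2 h2]; split; first exact: bdd_comb.
    move=> B' hB'; have [h11 h12] := h1 B' hB'; have [h21 h22] := h2 B' hB'.
    rewrite comb_compl comb_compr; last exact: bdd_lin (K_bdd hB').
    by split; apply: (sub_comb K_subspace).
  + move=> A1 A2 [b1 h1] [b2 h2]; split; first exact: bdd_comp.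
    move=> B' hB'; split.
      exact: (h1 _ (h2 B' hB').1).1.
    exact: (h2 _ (h1 B' hB').2).2.
- move=> A' bA hA'; split => // B' hB'.
  have hK := K_closed; have bB := K_bdd hB'.
  split.
  + have [c c0 hc] := lip_r bB.
    apply: (close_map (F := fun X => op_comp X B') (Q := Q) hK c0 (bdd_comp bA bB)) => //.
      by move=> B'' e _ e0; apply: hc.
    by move=> X [_ hX]; case: (hX B' hB').
  + have [c c0 hc] := lip_l bB.
    apply: (close_map (F := op_comp B') (Q := Q) hK c0 (bdd_comp bB bA)) => //.
      by move=> B'' e _ e0; apply: hc.
    by move=> X [_ hX]; case: (hX B' hB').
- move=> X [->|->]; split => //.
  + by move=> B' hB'; case: (stepA hB').
  + by move=> B' hB'; case: (stepA hB').
Qed.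

Lemma P_comm : P = comm Td T.
Proof. by apply: funext => x; rewrite /P /comm /op_sub /op_comp /op_id hTdT. Qed.

Lemma Alg_gen n m : Alg (gen n m).
Proof.
have sA := Alg_subalgebra.
elim: m n => [|m IH] n.
  elim: n => [|n IHn].
    rewrite gen00 P_comm; apply: (sub_sub sA.1); apply: sA.2;
      [exact: Alg_Td | exact: Alg_T | exact: Alg_T | exact: Alg_Td].
  by rewrite -gen_S; apply: sA.2; [exact: Alg_T | exact: IHn].
by rewrite -gen_Sr; apply: sA.2; [exact: IH | exact: Alg_Td].
Qed.

Lemma K_Alg A : K A -> Alg A.
Proof.
move=> hA; apply: hA; [exact: Alg_subalgebra.1 | exact: Alg_closed |].
by move=> B [n [m ->]]; apply: Alg_gen.
Qed.


Lemma comm_0l (Y : op H) : lin_op Y -> comm op0 Y = op0.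
Proof. by move=> hY; apply: funext => x; rewrite /comm /op_sub /op_comp /op0 lin0 // subrr. Qed.
Lemma comm_0r (X : op H) : lin_op X -> comm X op0 = op0.
Proof. by move=> hX; apply: funext => x; rewrite /comm /op_sub /op_comp /op0 lin0 // subrr. Qed.
Lemma comm_combl a (A B Y : op H) : lin_op Y ->
  comm (op_add (op_scale a A) B) Y = op_add (op_scale a (comm A Y)) (comm B Y).
Proof.
move=> hY; apply: funext => x; rewrite /comm /op_sub /op_comp /op_add /op_scale.
by rewrite (linD hY) (linZ hY) addsubACA scalerBr.
Qed.
Lemma comm_combr a (A B X : op H) : lin_op X ->
  comm X (op_add (op_scale a A) B) = op_add (op_scale a (comm X A)) (comm X B).
Proof.
move=> hX; apply: funext => x; rewrite /comm /op_sub /op_comp /op_add /op_scale.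
by rewrite (linD hX) (linZ hX) addsubACA scalerBr.
Qed.
Lemma comm_compl (A1 A2 Y : op H) : lin_op A1 ->
  comm (op_comp A1 A2) Y = op_add (op_comp A1 (comm A2 Y)) (op_comp (comm A1 Y) A2).
Proof.
move=> h1; apply: funext => x; rewrite /comm /op_sub /op_comp /op_add.
by rewrite (linB h1) subsubK.
Qed.
Lemma comm_compr (X Y1 Y2 : op H) : lin_op Y1 ->
  comm X (op_comp Y1 Y2) = op_add (op_comp (comm X Y1) Y2) (op_comp Y1 (comm X Y2)).
Proof.
move=> h1; apply: funext => x; rewrite /comm /op_sub /op_comp /op_add.
by rewrite (linB h1) subsubK.
Qed.

Lemma comm_TT : comm T T = op0.
Proof. by apply: funext => x; rewrite /comm /op_sub /op_comp subrr. Qed.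
Lemma comm_TdTd : comm Td Td = op0.
Proof. by apply: funext => x; rewrite /comm /op_sub /op_comp subrr. Qed.
Lemma comm_TTd : comm T Td = op_scale (-1) P.
Proof.
apply: funext => x; rewrite /comm /P /op_sub /op_comp /op_scale /op_id hTdT.
by rewrite scaleN1r opprB.
Qed.

Lemma stepC1 X : Alg X -> K (comm X T) /\ K (comm X Td).
Proof.
move=> hX.
pose Q := fun X => Alg X /\ K (comm X T) /\ K (comm X Td).
suff : Q X by case.
have sK := K_subspace; have sA := Alg_subalgebra.
apply: hX.
- split; first split.
  + by move=> A [hA _]; apply: Alg_bdd.
  + split; first exact: (sub0 sA.1).
    rewrite !comm_0l; try exact: bdd_lin.
    split; apply: (sub0 sK).
  + move=> a A1 A2 [a1 [h11 h12]] [a2 [h21 h22]]; split.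
      exact: (sub_comb sA.1).
    rewrite !comm_combl; try exact: bdd_lin.
    split; apply: (sub_comb sK); assumption.
  + move=> A1 A2 [a1 [h11 h12]] [a2 [h21 h22]]; split; first by apply: sA.2.
    have l1 := bdd_lin (Alg_bdd a1).
    rewrite (comm_compl _ _ l1) (comm_compl _ _ l1).
    have [e1 _] := stepB a1 h21.
    have [_ e2] := stepB a2 h11.
    have [e3 _] := stepB a1 h22.
    have [_ e4] := stepB a2 h12.
    by split; apply: (sub_add sK).
- move=> A bA hA; split.
    apply: Alg_closed => // e e0; have [B [[QB _] hB]] := hA e e0.
    by exists B.
  have hK := K_closed.
  have Hc Y : bdd ip Y -> (forall B, Q B -> K (comm B Y)) -> K (comm A Y).
    move=> bY hQ; have [c c0 hc] := lip_comm bY.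
    apply: (close_map (F := fun B => comm B Y) (Q := Q) hK c0 (bdd_comm bA bY)) => //.
    move=> B' e _ e0 hB; have [_ h] := hc _ _ _ e0 hB; exact: h.
  split.
  + by apply: Hc hTb _ => B [_ []].
  + by apply: Hc hTdb _ => B [_ []].
- move=> B [->|->]; split.
  + exact: Alg_T.
  + rewrite comm_TT comm_TTd; split; first exact: (sub0 sK).
    apply: (sub_scale sK); exact: (K_gen 0 0).
  + exact: Alg_Td.
  + rewrite comm_TdTd -P_comm; split; last exact: (sub0 sK).
    exact: (K_gen 0 0).
Qed.



Lemma stepC2 X Y : Alg X -> Alg Y -> K (comm X Y).
Proof.
move=> hX hY; move: X hX.
pose Q := fun Y => Alg Y /\ forall X, Alg X -> K (comm X Y).
suff : Q Y by case.
have sK := K_subspace; have sA := Alg_subalgebra.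
apply: hY.
- split; first split.
  + by move=> A [hA _]; apply: Alg_bdd.
  + split; first exact: (sub0 sA.1).
    move=> X hX; have lX := bdd_lin (Alg_bdd hX).
    rewrite (comm_0r lX); exact: (sub0 sK).
  + move=> a A1 A2 [a1 h1] [a2 h2]; split; first exact: (sub_comb sA.1).
    move=> X hX; have lX := bdd_lin (Alg_bdd hX).
    rewrite (comm_combr _ _ _ lX).
    have k1 := h1 X hX; have k2 := h2 X hX.
    by apply: (sub_comb sK).
  + move=> A1 A2 [a1 h1] [a2 h2]; split; first by apply: sA.2.
    move=> X hX; have l1 := bdd_lin (Alg_bdd a1).
    rewrite (comm_compr _ _ l1).
    have [_ e1] := stepB a2 (h1 X hX).
    have [e2 _] := stepB a1 (h2 X hX).
    by apply: (sub_add sK).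
- move=> A bA hA; split.
    apply: Alg_closed => // e e0; have [B [[QB _] hB]] := hA e e0.
    by exists B.
  move=> X hX; have bX := Alg_bdd hX.
  have [c c0 hc] := lip_comm bX.
  apply: (close_map (F := comm X) (Q := Q) K_closed c0 (bdd_comm bX bA)) => //.
    move=> B' e _ e0 hB; have [h _] := hc _ _ _ e0 hB; exact: h.
  by move=> B [_ hB]; apply: hB.
- move=> B [->|->]; split.
  + exact: Alg_T.
  + by move=> X hX; have [h _] := stepC1 hX.
  + exact: Alg_Td.
  + by move=> X hX; have [_ h] := stepC1 hX.
Qed.

Lemma main_eq A : K A <-> commutator_ideal ip Alg A.
Proof.
split.
  move=> hA J [Jsub JAlg Jid] Jcl Jcomm; apply: hA => //.
  move=> B [n [m ->]].
  elim: m n => [|m IH] n.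
    elim: n => [|n IHn].
      rewrite gen00 P_comm; apply: Jcomm; [exact: Alg_Td | exact: Alg_T].
    rewrite -gen_S; have [h _] := Jid T _ Alg_T IHn; exact: h.
  rewrite -gen_Sr; have [_ h] := Jid Td _ Alg_Td (IH n); exact: h.
move=> hA; apply: hA.
- split; [exact: K_subspace | exact: K_Alg | ].
  move=> A' B hA' hB; exact: stepB.
- exact: K_closed.
- move=> X Y hX hY; exact: stepC2.
Qed.
End Main.
End IP.

Theorem proposition2p19 (R : realType) (H : lmodType R[i]) (ip : H -> H -> R[i])
  (hH : is_hilbert ip) (T Ts Td : H -> H)
  (hTs : is_adjoint ip T Ts) (hTsb : bdd ip Ts)
  (hnat : natural ip T Ts) (hTd : moore_penrose ip T Ts Td) :
  let P := op_sub op_id (op_comp T Td) in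
  forall A : H -> H,
    closed_span ip (fun B => exists n m : nat,
                      B = op_comp (op_comp (op_pow T n) P) (op_pow Td m)) A
    <-> commutator_ideal ip (closed_alg_gen ip (fun B => B = T \/ B = Td)) A.
Proof.
move=> P A.
have hTb : bdd ip T by case: hnat => [[h _] _].
case: hTd => B [hB hBT _ eTd].
have hTdb : bdd ip Td by rewrite eTd; apply: (bdd_comp hH hB hTsb).
have hTdT : forall x, Td (T x) = x.
  by move=> x; rewrite eTd; exact: (congr1 (fun f => f x) hBT).
exact: (main_eq hH hTb hTdb hTdT A).
Qed.
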